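(* Let $b\in\mathbb{R}$. For $X=(y^1,y^2,y^3,x^1,x^2,x^3,z^1,z^2,z^3)^T\in\mathbb{C}^9$ write $y^\pm=y^1\pm\mathrm{i}y^2$, $x^\pm=x^1\pm\mathrm{i}x^2$, $z^\pm=z^1\pm\mathrm{i}z^2$, and $$\mathcal{L}_X(\lambda)=\frac{\mathrm{i}}{2}\begin{pmatrix}u(\lambda)&v(\lambda)\\ w(\lambda)&-u(\lambda)\end{pmatrix},\quad u=b+\frac{y^3}{\lambda}+\frac{x^3}{\lambda^2}+\frac{z^3}{\lambda^3},\ v=\frac{y^-}{\lambda}+\frac{x^-}{\lambda^2}+\frac{z^-}{\lambda^3},\ w=\frac{y^+}{\lambda}+\frac{x^+}{\lambda^2}+\frac{z^+}{\lambda^3}.$$ Let $\eta\in\mathbb{C}$, $\eta_1=\eta$, $\eta_2=\bar\eta$, and let $\mu_1,\mu_2\in\mathbb{C}$ satisfy $4\mu_j^2+u(\eta_j)^2+v(\eta_j)w(\eta_j)=0$ ($j=1,2$). Define (whenever the denominators are nonzero) $$s=\frac{u(\eta_1)-\mu_1}{v(\eta_1)},\qquad t=\frac{(\eta_1-\eta_2)(u(\eta_1)+\mu_1)(u(\eta_2)-\mu_2)}{(u(\eta_1)+\mu_1)w(\eta_2)-(u(\eta_2)-\mu_2)w(\eta_1)},$$ $$\mathcal{M}(\lambda)=\begin{pmatrix}\lambda-\eta_1+st& t\\ -s^2t+(\eta_1-\eta_2)s&\lambda-\eta_2-st\end{pmatrix}.$$ Suppose $\breve X\in\mathbb{C}^9$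 is such that $\mathcal{M}(\lambda)\mathcal{L}_X(\lambda)=\mathcal{L}_{\breve X}(\lambda)\mathcal{M}(\lambda)$ for all $\lambda$ (this defines the two-point Bäcklund transformation $X\mapsto\breve X$). Then $$\breve X=\Phi\,X+X_0,\qquad \Phi=\begin{pmatrix}\mathbb{1}_3&0&0\\ A&\mathbb{1}_3&0\\ B&A&\mathbb{1}_3\end{pmatrix},$$ where $A,B$ are $3\times3$ matrices depending only on $s,t,\eta$, and $X_0\in\mathbb{C}^9$ is a vector depending only on $s,t,\eta$ and $b$ (here $\mathbb 1_3$ is the $3\times3$ identity and $0$ the $3\times3$ zero matrix).
   Context: $\mathrm{i}$ is the imaginary unit and $\bar\eta$ the complex conjugate of $\eta$. The quantities $s,t$ themselves depend on $X$, so the map $X\mapsto\breve X$ is nonlinear; the claim concerns the dependence of $\breve X$ on $X$ with $s,t,\eta$ regarded as parameters. *)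

(* Defs.v *)
From HB Require Import structures.
From mathcomp Require Import all_boot all_order all_algebra.
From mathcomp Require Import reals complex.
Set Implicit Arguments. Unset Strict Implicit. Unset Printing Implicit Defensive.
Import Order.TTheory GRing.Theory Num.Theory.
Local Open Scope ring_scope.
Local Open Scope complex_scope.

Section Defs.
Variable R : realType.
Local Notation C := R[i].

(* X = (y1,y2,y3,x1,x2,x3,z1,z2,z3)^T; crd X k is the (0-based) k-th entry *)
Definition crd (X : 'cV[C]_9) (k : nat) : C := X (inord k) 0.

(* y^3, x^3, z^3 are entries 2, 5, 8; y^{+-} = y1 +- i y2 etc. *)
Definition uL (b : R) (X : 'cV[C]_9) (l : C) : C :=
  b%:C + crd X 2 / l + crd X 5 / l ^+ 2 + crd X 8 / l ^+ 3.
Definition vL (X : 'cV[C]_9) (l : C) : C :=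
  (crd X 0 - 'i * crd X 1) / l + (crd X 3 - 'i * crd X 4) / l ^+ 2
  + (crd X 6 - 'i * crd X 7) / l ^+ 3.
Definition wL (X : 'cV[C]_9) (l : C) : C :=
  (crd X 0 + 'i * crd X 1) / l + (crd X 3 + 'i * crd X 4) / l ^+ 2
  + (crd X 6 + 'i * crd X 7) / l ^+ 3.

Definition LaxL (b : R) (X : 'cV[C]_9) (l : C) : 'M[C]_2 :=
  ('i / 2) *: \matrix_(i < 2, j < 2)
     (if i == 0 :> nat then (if j == 0 :> nat then uL b X l else vL X l)
      else (if j == 0 :> nat then wL X l else - uL b X l)).

Definition s_of (b : R) (X : 'cV[C]_9) (eta1 mu1 : C) : C :=
  (uL b X eta1 - mu1) / vL X eta1.
Definition t_den (b : R) (X : 'cV[C]_9) (eta1 eta2 mu1 mu2 : C) : C :=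
  (uL b X eta1 + mu1) * wL X eta2 - (uL b X eta2 - mu2) * wL X eta1.
Definition t_of (b : R) (X : 'cV[C]_9) (eta1 eta2 mu1 mu2 : C) : C :=
  (eta1 - eta2) * (uL b X eta1 + mu1) * (uL b X eta2 - mu2)
  / t_den b X eta1 eta2 mu1 mu2.

Definition Mdress (eta1 eta2 s t l : C) : 'M[C]_2 :=
  \matrix_(i < 2, j < 2)
     (if i == 0 :> nat then (if j == 0 :> nat then l - eta1 + s * t else t)
      else (if j == 0 :> nat then - s ^+ 2 * t + (eta1 - eta2) * s
            else l - eta2 - s * t)).

(* Phi = [[1,0,0],[A,1,0],[B,A,1]] as a 9x9 matrix, 3x3 blocks *)
Definition Phi (A B : 'M[C]_3) : 'M[C]_9 :=
  \matrix_(i < 9, j < 9)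
    (let bi := (i %/ 3)%N in let bj := (j %/ 3)%N in
     let ri : 'I_3 := inord (i %% 3) in let rj : 'I_3 := inord (j %% 3) in
     if bi == bj then (ri == rj)%:R
     else if bi == bj.+1 then A ri rj
     else if bi == bj.+2 then B ri rj
     else 0).

End Defs.

(* Main.v *)
Require Import Defs.
From HB Require Import structures.
From mathcomp Require Import all_boot all_order all_algebra.
From mathcomp Require Import reals complex.
From mathcomp Require Import ring.
Import Order.TTheory GRing.Theory Num.Theory.
Local Open Scope ring_scope.

Section Gen.
Variable F : numFieldType.
Variable j : F.
Hypothesis j0 : j != 0.

Lemma two_neq0 : (2 : F) != 0. Proof. by rewrite pnatr_eq0. Qed.

Definition o1 : 'I_2 := @Ordinal 2 1 isT.
Lemma sum2 (T : nmodType) (f : 'I_2 -> T) : \sum_(k < 2) f k = f ord0 + f o1.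
Proof. rewrite !big_ord_recl big_ord0 addr0; congr (_ + f _); exact/val_inj. Qed.
Lemma E2 (i : 'I_2) : i = ord0 \/ i = o1.
Proof. case: i => [[|[|//]] ?]; [left|right]; exact/val_inj. Qed.
Lemma addE (A B : 'M[F]_2) i k : (A + B) i k = A i k + B i k. Proof. by rewrite mxE. Qed.
Lemma oppE (A : 'M[F]_2) i k : (- A) i k = - A i k. Proof. by rewrite mxE. Qed.
Lemma sclE a (A : 'M[F]_2) i k : (a *: A) i k = a * A i k. Proof. by rewrite mxE. Qed.
Lemma mulE2 (A B : 'M[F]_2) i k : (A *m B) i k = A i ord0 * B ord0 k + A i o1 * B o1 k.
Proof. by rewrite mxE sum2. Qed.
Lemma sclmE a i k : (a%:M : 'M[F]_2) i k = a *+ (i == k). Proof. by rewrite mxE. Qed.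
Definition entE := (addE, oppE, sclE, mulE2, sclmE).

Definition Tm (a b c : F) : 'M[F]_2 := \matrix_(i < 2, k < 2)
  (if i == 0 :> nat then (if k == 0 :> nat then c else a - j * b)
   else (if k == 0 :> nat then a + j * b else - c)).
Fact Ej_key : unit. Proof. exact: tt. Qed.
Definition Ej := locked_with Ej_key (fun k : nat => Tm (k == 0)%N%:R (k == 1)%N%:R (k == 2)%N%:R).
Lemma EjE k : Ej k = Tm (k == 0)%N%:R (k == 1)%N%:R (k == 2)%N%:R.
Proof. by rewrite /Ej unlock. Qed.
Definition Tinv_body (k : nat) (P : 'M[F]_2) : F :=
  match k with 0%N => (P o1 ord0 + P ord0 o1) / 2 | 1%N => (P o1 ord0 - P ord0 o1) / (2 * j)
  | _ => P ord0 ord0 end.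
Fact Tinv_key : unit. Proof. exact: tt. Qed.
Definition Tinv := locked_with Tinv_key Tinv_body.
Lemma TinvE k P : Tinv k P = Tinv_body k P.
Proof. by rewrite /Tinv unlock. Qed.
Fact comm_key : unit. Proof. exact: tt. Qed.
Definition comm := locked_with comm_key (fun N P : 'M[F]_2 => N *m P - P *m N).
Lemma commE N P : comm N P = N *m P - P *m N. Proof. by rewrite /comm unlock. Qed.

Definition Bop (N P : 'M[F]_2) := - (comm N P *m N).
Definition Xop (N Q : 'M[F]_2) := - (Q *m N).
Definition Zop (N Q : 'M[F]_2) := Q *m N *m N.

Lemma Tinv0 a b c : Tinv 0 (Tm a b c) = a.
Proof. rewrite TinvE /Tinv_body !mxE /=; field; rewrite ?mulf_neq0 ?two_neq0 //. Qed.
Lemma Tinv1 a b c : Tinv 1 (Tm a b c) = b.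
Proof. rewrite TinvE /Tinv_body !mxE /=; field; rewrite ?mulf_neq0 ?two_neq0 //. Qed.
Lemma Tinv2 a b c : Tinv 2 (Tm a b c) = c.
Proof. by rewrite TinvE /Tinv_body !mxE /=. Qed.

Lemma TinvD k (P Q : 'M[F]_2) : Tinv k (P + Q) = Tinv k P + Tinv k Q.
Proof.
case: k => [|[|k]]; rewrite !TinvE /Tinv_body !addE //; field;
  rewrite ?mulf_neq0 ?two_neq0 //.
Qed.

Lemma TmLin a b c : Tm a b c = a *: Ej 0 + b *: Ej 1 + c *: Ej 2.
Proof.
apply/matrixP => i k; rewrite !entE !EjE /Tm !mxE.
case: (E2 i) => ->; case: (E2 k) => -> /=; ring.
Qed.

Lemma LA k (N : 'M[F]_2) a b c : Tinv k (comm N (Tm a b c)) =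
  a * Tinv k (comm N (Ej 0)) + b * Tinv k (comm N (Ej 1)) + c * Tinv k (comm N (Ej 2)).
Proof.
rewrite TmLin; move: (Ej 0) (Ej 1) (Ej 2) => T0 T1 T2.
case: k => [|[|k]]; rewrite !TinvE /Tinv_body !commE !entE; field;
  rewrite ?mulf_neq0 ?two_neq0 //.
Qed.

Lemma LB k (N : 'M[F]_2) a b c : Tinv k (Bop N (Tm a b c)) =
  a * Tinv k (Bop N (Ej 0)) + b * Tinv k (Bop N (Ej 1))
  + c * Tinv k (Bop N (Ej 2)).
Proof.
rewrite /Bop TmLin; move: (Ej 0) (Ej 1) (Ej 2) => T0 T1 T2.
case: k => [|[|k]]; rewrite !TinvE /Tinv_body !commE !entE; field;
  rewrite ?mulf_neq0 ?two_neq0 //.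
Qed.

Lemma solve (N P0 Y X Z Yb Xb Zb : 'M[F]_2) :
  N *m P0 - P0 *m N + Y = Yb -> N *m Y - Yb *m N + X = Xb -> N *m X - Xb *m N + Z = Zb ->
  [/\ Yb = comm N P0 + Y, Xb = comm N Y + X + Xop N (comm N P0) &
      Zb = comm N X + Bop N Y + Z + Zop N (comm N P0)].
Proof.
move=> <- <- <-; rewrite /Xop /Bop /Zop; split; apply/matrixP => i k; rewrite !commE !entE; ring.
Qed.

Lemma expand (N P0 P1 P2 P3 Q1 Q2 Q3 : 'M[F]_2) (l : F) : l != 0 ->
  (l%:M + N) *m (P0 + l^-1 *: P1 + (l ^+ 2)^-1 *: P2 + (l ^+ 3)^-1 *: P3)
  - (P0 + l^-1 *: Q1 + (l ^+ 2)^-1 *: Q2 + (l ^+ 3)^-1 *: Q3) *m (l%:M + N)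
  = (l ^+ 3)^-1 *: (l ^+ 3 *: (N *m P0 - P0 *m N + P1 - Q1)
      + l ^+ 2 *: (N *m P1 - Q1 *m N + P2 - Q2)
      + l *: (N *m P2 - Q2 *m N + P3 - Q3) + (N *m P3 - Q3 *m N)).
Proof.
move=> l0; apply/matrixP => i k; rewrite !entE.
case: (E2 i) => ->; case: (E2 k) => -> /=; field; exact l0.
Qed.

Lemma coef_scal (c0 c1 c2 c3 : F) :
  (forall l : F, l != 0 -> l ^+ 3 * c3 + l ^+ 2 * c2 + l * c1 + c0 = 0) ->
  c3 = 0 /\ c2 = 0 /\ c1 = 0.
Proof.
move=> H.
have h1 := H 1 (oner_neq0 _).
have h2 := H 2 two_neq0.
have n3 : (3 : F) != 0 by rewrite pnatr_eq0.
have n4 : (4 : F) != 0 by rewrite pnatr_eq0.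
have h3 := H 3 n3.
have h4 := H 4 n4.
have e3 : 6 * c3 = (4 ^+ 3 * c3 + 4 ^+ 2 * c2 + 4 * c1 + c0)
  - 3 * (3 ^+ 3 * c3 + 3 ^+ 2 * c2 + 3 * c1 + c0)
  + 3 * (2 ^+ 3 * c3 + 2 ^+ 2 * c2 + 2 * c1 + c0)
  - (1 ^+ 3 * c3 + 1 ^+ 2 * c2 + 1 * c1 + c0) by ring.
rewrite h1 h2 h3 h4 !mulr0 !subr0 addr0 in e3.
have c30 : c3 = 0 by move/eqP: e3; rewrite mulf_eq0 pnatr_eq0 /= => /eqP.
have e2 : 2 * c2 = (3 ^+ 3 * c3 + 3 ^+ 2 * c2 + 3 * c1 + c0)
  - 2 * (2 ^+ 3 * c3 + 2 ^+ 2 * c2 + 2 * c1 + c0)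
  + (1 ^+ 3 * c3 + 1 ^+ 2 * c2 + 1 * c1 + c0) - 12 * c3 by ring.
rewrite h1 h2 h3 c30 !mulr0 !subr0 addr0 in e2.
have c20 : c2 = 0 by move/eqP: e2; rewrite mulf_eq0 pnatr_eq0 /= => /eqP.
have e1 : c1 = (2 ^+ 3 * c3 + 2 ^+ 2 * c2 + 2 * c1 + c0)
  - (1 ^+ 3 * c3 + 1 ^+ 2 * c2 + 1 * c1 + c0) - 7 * c3 - 3 * c2 by ring.
rewrite h1 h2 c30 c20 !mulr0 !subr0 in e1.
by [].
Qed.

Lemma coef_mx (C0 C1 C2 C3 : 'M[F]_2) :
  (forall l : F, l != 0 -> l ^+ 3 *: C3 + l ^+ 2 *: C2 + l *: C1 + C0 = 0) ->
  [/\ C3 = 0, C2 = 0 & C1 = 0].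
Proof.
move=> H.
have K : forall i k, [/\ C3 i k = 0, C2 i k = 0 & C1 i k = 0].
  move=> i k; have [a [b c]] : C3 i k = 0 /\ C2 i k = 0 /\ C1 i k = 0.
    apply: (coef_scal (C0 i k)) => l l0.
    by have := congr1 (fun M : 'M[F]_2 => M i k) (H l l0); rewrite !entE mxE.
  by [].
split; apply/matrixP => i k; case: (K i k) => a b c; by rewrite mxE ?a ?b ?c.
Qed.

End Gen.

Arguments Tm {F} j a b c.
Arguments Ej {F} j _.
Arguments comm {F}.
Arguments Bop {F}. Arguments Xop {F}. Arguments Zop {F}.
Arguments Tinv {F} j _ _.
Arguments Tinv : simpl never.
Arguments Ej : simpl never.
Arguments Tm : simpl never.
Arguments solve {F N P0 Y X Z Yb Xb Zb}.

Local Open Scope complex_scope.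

Section Conc.
Variable R : realType.
Local Notation C := R[i].
Local Notation CF := (R[i] : numFieldType).

Lemma sum9 (T : nmodType) (f : 'I_9 -> T) : \sum_(k < 9) f k =
  f (inord 0) + f (inord 1) + f (inord 2) + f (inord 3) + f (inord 4) + f (inord 5) + f (inord 6) + f (inord 7) + f (inord 8).
Proof.
rewrite (eq_bigr (fun k : 'I_9 => f (inord k))) => [|k _]; last by rewrite inord_val.
rewrite -(big_mkord xpredT (fun k => f (inord k))).
by rewrite unlock /= !addrA addr0.
Qed.

Lemma i_neq0 : (Num.imaginary : C) != 0.
Proof. exact: neq0Ci. Qed.

Definition Ym (X : 'cV[C]_9) := @Tm CF 'i (crd X 0) (crd X 1) (crd X 2).
Definition Xm (X : 'cV[C]_9) := @Tm CF 'i (crd X 3) (crd X 4) (crd X 5).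
Definition Zm (X : 'cV[C]_9) := @Tm CF 'i (crd X 6) (crd X 7) (crd X 8).
Definition sig : 'M[C]_2 := @Tm CF 'i 0 0 1.
Definition Nm (s t eta : C) := Mdress eta eta^* s t 0.
Definition Afun (s t eta : C) : 'M[C]_3 :=
  \matrix_(k < 3, l < 3) @Tinv CF 'i k (@comm CF (Nm s t eta) (@Ej CF 'i l)).
Definition Bfun (s t eta : C) : 'M[C]_3 :=
  \matrix_(k < 3, l < 3) @Tinv CF 'i k (@Bop CF (Nm s t eta) (@Ej CF 'i l)).
Definition X0fun (s t eta : C) (b : R) : 'cV[C]_9 :=
  \col_(i < 9) (let P0 := @comm CF (Nm s t eta) (b%:C *: sig) in
    if (i < 3)%N then @Tinv CF 'i (i %% 3) P0
    else if (i < 6)%N then @Tinv CF 'i (i %% 3) (@Xop CF (Nm s t eta) P0)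
    else @Tinv CF 'i (i %% 3) (@Zop CF (Nm s t eta) P0)).

Lemma LaxL_dec (b : R) (X : 'cV[C]_9) (l : C) : LaxL b X l =
  ('i / 2) *: (b%:C *: sig + l^-1 *: Ym X + (l ^+ 2)^-1 *: Xm X + (l ^+ 3)^-1 *: Zm X).
Proof.
apply/matrixP => i k; rewrite !mxE.
case: i => [[|[|//]] ?]; case: k => [[|[|//]] ?]; rewrite /= ?mxE /= /uL /vL /wL; ring.
Qed.

Lemma Mdress_dec (e1 e2 s t l : C) : Mdress e1 e2 s t l = l%:M + Mdress e1 e2 s t 0.
Proof.
apply/matrixP => i k; rewrite !mxE.
case: i => [[|[|//]] ?]; case: k => [[|[|//]] ?]; rewrite /= ?mxE /=; ring.
Qed.

Lemma cY0 X : crd X 0 = @Tinv CF 'i 0 (Ym X). Proof. by rewrite /Ym Tinv0. Qed.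
Lemma cY1 X : crd X 1 = @Tinv CF 'i 1 (Ym X). Proof. by rewrite /Ym (@Tinv1 _ _ i_neq0). Qed.
Lemma cY2 X : crd X 2 = @Tinv CF 'i 2 (Ym X). Proof. by rewrite /Ym Tinv2. Qed.
Lemma cX0 X : crd X 3 = @Tinv CF 'i 0 (Xm X). Proof. by rewrite /Xm Tinv0. Qed.
Lemma cX1 X : crd X 4 = @Tinv CF 'i 1 (Xm X). Proof. by rewrite /Xm (@Tinv1 _ _ i_neq0). Qed.
Lemma cX2 X : crd X 5 = @Tinv CF 'i 2 (Xm X). Proof. by rewrite /Xm Tinv2. Qed.
Lemma cZ0 X : crd X 6 = @Tinv CF 'i 0 (Zm X). Proof. by rewrite /Zm Tinv0. Qed.
Lemma cZ1 X : crd X 7 = @Tinv CF 'i 1 (Zm X). Proof. by rewrite /Zm (@Tinv1 _ _ i_neq0). Qed.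
Lemma cZ2 X : crd X 8 = @Tinv CF 'i 2 (Zm X). Proof. by rewrite /Zm Tinv2. Qed.

Lemma crdO (X : 'cV[C]_9) k (Hk : (k < 9)%N) : X (Ordinal Hk) 0 = crd X k.
Proof. by rewrite /crd; congr (X _ _); apply/val_inj; rewrite /= inordK. Qed.

Lemma inord_eq3 a b : (a < 3)%N -> (b < 3)%N -> (inord a == inord b :> 'I_3) = (a == b).
Proof. by move=> ha hb; apply/eqP/eqP => [/(congr1 val)|->//]; rewrite /= !inordK. Qed.

Lemma m33 : (3 %% 3 = 0)%N. Proof. by []. Qed.
Lemma m43 : (4 %% 3 = 1)%N. Proof. by []. Qed.
Lemma m53 : (5 %% 3 = 2)%N. Proof. by []. Qed.
Lemma m63 : (6 %% 3 = 0)%N. Proof. by []. Qed.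
Lemma m73 : (7 %% 3 = 1)%N. Proof. by []. Qed.
Lemma m83 : (8 %% 3 = 2)%N. Proof. by []. Qed.
Lemma m03 : (0 %% 3 = 0)%N. Proof. by []. Qed.
Lemma m13 : (1 %% 3 = 1)%N. Proof. by []. Qed.
Lemma m23 : (2 %% 3 = 2)%N. Proof. by []. Qed.
Definition modE := (m03, m13, m23, m33, m43, m53, m63, m73, m83).

End Conc.

Arguments Ym {R}. Arguments Xm {R}. Arguments Zm {R}. Arguments sig {R}.
Arguments Nm : simpl never.

Theorem proposition7 (R : realType) :
  exists (A B : R[i] -> R[i] -> R[i] -> 'M[R[i]]_3)
         (X0 : R[i] -> R[i] -> R[i] -> R -> 'cV[R[i]]_9),
  forall (b : R) (eta mu1 mu2 : R[i]) (X Xb : 'cV[R[i]]_9),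
    let eta1 := eta in
    let eta2 := eta^* in
    eta != 0 ->
    4 * mu1 ^+ 2 + uL b X eta1 ^+ 2 + vL X eta1 * wL X eta1 = 0 ->
    4 * mu2 ^+ 2 + uL b X eta2 ^+ 2 + vL X eta2 * wL X eta2 = 0 ->
    vL X eta1 != 0 ->
    t_den b X eta1 eta2 mu1 mu2 != 0 ->
    let s := s_of b X eta1 mu1 in
    let t := t_of b X eta1 eta2 mu1 mu2 in
    (forall l : R[i], l != 0 ->
       Mdress eta1 eta2 s t l *m LaxL b X l = LaxL b Xb l *m Mdress eta1 eta2 s t l) ->
    Xb = Phi (A s t eta) (B s t eta) *m X + X0 s t eta b.
Proof.
exists (@Afun R), (@Bfun R), (@X0fun R).
move=> b eta mu1 mu2 X Xb e1 e2 _ _ _ _ _ s t H.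
clearbody s t.
rewrite /e1 /e2 in H *; clear e1 e2.
have ci : ('i / 2 : R[i]) != 0 by rewrite mulf_neq0 ?invr_eq0 ?i_neq0 ?two_neq0.
pose N := Nm R s t eta.
pose P0 := b%:C *: sig.
have HC := @coef_mx _ (N *m Zm X - Zm Xb *m N)
   (N *m Xm X - Xm Xb *m N + Zm X - Zm Xb)
   (N *m Ym X - Ym Xb *m N + Xm X - Xm Xb)
   (N *m P0 - P0 *m N + Ym X - Ym Xb).
lapply HC; last first.
{ move=> l l0; have := H l l0.
  rewrite !LaxL_dec (@Mdress_dec R _ _ _ _ l) -[Mdress eta eta^* s t 0]/(Nm R s t eta) -/N.
  rewrite -scalemxAl -scalemxAr => /(scalerI ci) /eqP.
  rewrite -subr_eq0 expand // scaler_eq0 invr_eq0 expf_eq0 (negbTE l0) andbF /=.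
  by move/eqP. }
case=> c3 c2 c1.
move/eqP: c3; rewrite subr_eq0 => /eqP eY.
move/eqP: c2; rewrite subr_eq0 => /eqP eX.
move/eqP: c1; rewrite subr_eq0 => /eqP eZ.
have [eY' eX' eZ'] := solve eY eX eZ.
apply/matrixP => i k; rewrite ord1.
case: i => [[|[|[|[|[|[|[|[|[|//]]]]]]]]] Hi]; rewrite crdO.
Time all: rewrite ?cY0 ?cY1 ?cY2 ?cX0 ?cX1 ?cX2 ?cZ0 ?cZ1 ?cZ2 ?eZ' ?eX' ?eY'.
Time all: rewrite ?(@TinvD _ _ (@i_neq0 R)).
Time all: rewrite /Ym /Xm /Zm; try rewrite (@LA _ _ (@i_neq0 R)); try rewrite (@LB _ _ (@i_neq0 R)).
Time all: rewrite ?Tinv0 ?(@Tinv1 _ _ (@i_neq0 R)) ?Tinv2.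
Time all: rewrite /X0fun /Phi !mxE sum9 /= ?inordK //= ?modE /=.
Time all: rewrite /Afun /Bfun ?mxE ?inordK //= ?modE /= /crd /N /P0.
Time all: rewrite ?(@TinvD _ _ (@i_neq0 R)) ?(@inord_eq3 0 0 erefl erefl) ?(@inord_eq3 0 1 erefl erefl) ?(@inord_eq3 0 2 erefl erefl) ?(@inord_eq3 1 0 erefl erefl) ?(@inord_eq3 1 1 erefl erefl) ?(@inord_eq3 1 2 erefl erefl) ?(@inord_eq3 2 0 erefl erefl) ?(@inord_eq3 2 1 erefl erefl) ?(@inord_eq3 2 2 erefl erefl) /=.
Time all: rewrite !mul1r !mul0r ?addr0 ?add0r.
- rewrite addrC; reflexivity.
- rewrite addrC; reflexivity.
- rewrite addrC; reflexivity.
- rewrite [X (inord 0) 0 * _]mulrC [X (inord 1) 0 * _]mulrC [X (inord 2) 0 * _]mulrC; reflexivity.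
- rewrite [X (inord 0) 0 * _]mulrC [X (inord 1) 0 * _]mulrC [X (inord 2) 0 * _]mulrC; reflexivity.
- rewrite [X (inord 0) 0 * _]mulrC [X (inord 1) 0 * _]mulrC [X (inord 2) 0 * _]mulrC; reflexivity.
- rewrite [X (inord 0) 0 * _]mulrC [X (inord 1) 0 * _]mulrC [X (inord 2) 0 * _]mulrC [X (inord 3) 0 * _]mulrC [X (inord 4) 0 * _]mulrC [X (inord 5) 0 * _]mulrC.
  congr (_ + _ + _); rewrite [X in X = _](addrC (_ + _ + _)) !addrA; reflexivity.
- rewrite [X (inord 0) 0 * _]mulrC [X (inord 1) 0 * _]mulrC [X (inord 2) 0 * _]mulrC [X (inord 3) 0 * _]mulrC [X (inord 4) 0 * _]mulrC [X (inord 5) 0 * _]mulrC.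
  congr (_ + _ + _); rewrite [X in X = _](addrC (_ + _ + _)) !addrA; reflexivity.
- rewrite [X (inord 0) 0 * _]mulrC [X (inord 1) 0 * _]mulrC [X (inord 2) 0 * _]mulrC [X (inord 3) 0 * _]mulrC [X (inord 4) 0 * _]mulrC [X (inord 5) 0 * _]mulrC.
  congr (_ + _ + _); rewrite [X in X = _](addrC (_ + _ + _)) !addrA; reflexivity.
Qed.
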